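(* Let $\mathcal{G}=(\mathcal{V},\mathcal{E})$ be connected, $c\in\mathbb{R}^n$, $\bar c=\frac1n\sum_ic_i$. Set $x^0=c$ and for $t\ge0$ let $\lambda^t=\frac1{2m}\sum_{(i,j)\in\mathcal{E}}|x_i^t-x_j^t|$; choose $e=(i,j)\in\mathcal{E}$ uniformly at random (independently across iterations); if $x_i^t<x_j^t$ set $x_i^{t+1}=x_i^t+\lambda^t$, $x_j^{t+1}=x_j^t-\lambda^t$; otherwise set $x_i^{t+1}=x_i^t-\lambda^t$, $x_j^{t+1}=x_j^t+\lambda^t$; all other coordinates are unchanged. Then for all $k\ge0$ $$\mathbb{E}\big[\|\bar c\mathbf{1}-x^k\|^2\big]\le\Big(1-\frac{\alpha(\mathcal{G})}{2m^2}\Big)^k\|\bar c\mathbf{1}-x^0\|^2 .$$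
   Context: $\mathcal{G}$ is an undirected graph with vertices $\mathcal{V}=\{1,\dots,n\}$ and $m=|\mathcal{E}|$ edges, each edge $e=(i,j)$ having an arbitrary but fixed orientation. The Laplacian is $\mathbf{L}=\mathbf{A}^\top\mathbf{A}$, where $\mathbf{A}\in\mathbb{R}^{m\times n}$ has for edge $(i,j)$ a row with $1$ in column $i$, $-1$ in column $j$, zeros elsewhere; $\alpha(\mathcal{G})$ is the second smallest eigenvalue of $\mathbf{L}$. $\mathbf{1}$ is the all-ones vector and $\|\cdot\|$ the Euclidean norm. *)

(* Defs.v *)
From HB Require Import structures.
From mathcomp Require Import all_boot all_order all_algebra.
Set Implicit Arguments. Unset Strict Implicit. Unset Printing Implicit Defensive.
Import Order.TTheory GRing.Theory Num.Theory.
Local Open Scope ring_scope.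

Section Graph.
Variables (n m : nat) (E : 'I_m -> 'I_n * 'I_n).

Definition simple_graph : Prop :=
  (forall e, (E e).1 != (E e).2) /\
  (forall e f, ((E e == E f) || (E e == ((E f).2, (E f).1))) -> e = f).

Definition adj : rel 'I_n :=
  fun u v => [exists e : 'I_m, (E e == (u, v)) || (E e == (v, u))].

Definition connected_graph : Prop := forall u v : 'I_n, connect adj u v.

Variable R : rcfType.

Definition incidence : 'M[R]_(m, n) :=
  \matrix_(e < m, k < n) (((k == (E e).1)%:R) - ((k == (E e).2)%:R)).

Definition laplacian : 'M[R]_n := (incidence)^T *m incidence.

(* a is the second smallest eigenvalue (counted with multiplicity) of L:
   the characteristic polynomial splits as prod (X - mu_i) with
   mu_0 <= mu_1 <= ... and a = mu_1. *)
Definition second_smallest_eigenvalue (L : 'M[R]_n) (a : R) : Prop :=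
  exists s : seq R,
    [/\ sorted <=%R s, char_poly L = \prod_(r <- s) ('X - r%:P) & a = s`_1].

Definition lambda_step (x : 'I_n -> R) : R :=
  (2 * m%:R)^-1 * \sum_(e < m) `|x (E e).1 - x (E e).2|.

Definition step (x : 'I_n -> R) (e : 'I_m) : 'I_n -> R :=
  let i := (E e).1 in let j := (E e).2 in let l := lambda_step x in
  fun k => if k == i then (if x i < x j then x i + l else x i - l)
           else if k == j then (if x i < x j then x j - l else x j + l)
           else x k.

(* x^k along a sequence of chosen edges (in chronological order) *)
Definition run (c : 'I_n -> R) (s : seq 'I_m) : 'I_n -> R := foldl step c s.

Definition mean (c : 'I_n -> R) : R := (n%:R)^-1 * \sum_(i < n) c i.

Definition sqdist_to_mean (c x : 'I_n -> R) : R :=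
  \sum_(i < n) (mean c - x i) ^+ 2.

(* E[ || cbar 1 - x^k ||^2 ] with edges i.i.d. uniform over the m edges *)
Definition expected_sqdist (c : 'I_n -> R) (k : nat) : R :=
  \sum_(s : k.-tuple 'I_m) (m%:R ^+ k)^-1 * sqdist_to_mean c (run c s).

End Graph.

(* Main.v *)
Require Import Defs.
From HB Require Import structures.
From mathcomp Require Import all_boot all_order all_algebra.
From mathcomp Require Import complex.
From mathcomp Require Import ring lra.
Import Order.TTheory GRing.Theory Num.Theory.
Local Open Scope ring_scope.

Module Aux.
Set Implicit Arguments. Unset Strict Implicit. Unset Printing Implicit Defensive.

Lemma count_lt_sorted (R : realDomainType) (s : seq R) :
  sorted <=%R s -> (count (fun x : R => (x < s`_1)%R) s <= 1)%N.
Proof.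
case: s => [|a [|b t]]; first by [].
  by move=> _ /=; case: (_ < _).
move=> /= /andP[ab pbt].
have allb : all (fun x => b <= x) t by apply: order_path_min pbt; exact: le_trans.
rewrite ltxx add0n.
have -> : count (fun x => x < b) t = 0%N.
  elim: t {pbt} allb => //= x t IH /andP[bx /IH ->]; by rewrite ltNge bx.
by case: (a < b).
Qed.

Lemma char_poly_conj (F : fieldType) n (P B : 'M[F]_n) : P \in unitmx ->
  char_poly (invmx P *m B *m P) = char_poly B.
Proof.
move=> Pu; rewrite /char_poly.
set Pp := map_mx polyC P; set Pi := map_mx polyC (invmx P).
have PiP : Pi *m Pp = 1%:M by rewrite -map_mxM mulVmx // map_mx1.
have -> : char_poly_mx (invmx P *m B *m P) = Pi *m char_poly_mx B *m Pp.
  rewrite /char_poly_mx mulmxBr mulmxBl !map_mxM -/Pp -/Pi; congr (_ - _).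
  by rewrite mul_mx_scalar -scalemxAl PiP scalemx1.
by rewrite !det_mulmx mulrAC -det_mulmx PiP det1 mul1r.
Qed.

Section Real.
Variables (R : rcfType) (n m : nat) (E : 'I_m -> 'I_n * 'I_n).

Lemma incidence_row e (f : 'I_n -> R) :
  \sum_k incidence E R e k * f k = f (E e).1 - f (E e).2.
Proof.
have one_pt : forall a : 'I_n, \sum_k (k == a)%:R * f k = f a.
  move=> a; rewrite (bigD1 a) //= eqxx mul1r big1 ?addr0 // => k /negbTE ->.
  by rewrite mul0r.
rewrite -!one_pt -sumrB; apply: eq_bigr => k _; by rewrite mxE mulrBl.
Qed.

Lemma quad_laplacian (y : 'I_n -> R) :
  ((\row_i y i) *m laplacian E R *m (\row_i y i)^T) 0 0 =
  \sum_e (y (E e).1 - y (E e).2) ^+ 2.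
Proof.
rewrite /laplacian !mulmxA -mulmxA -[_ *m (incidence E R)^T]trmxK.
rewrite trmx_mul trmxK mxE; apply: eq_bigr => e _.
rewrite !mxE expr2; congr (_ * _); rewrite -incidence_row;
  by apply: eq_bigr => k _; rewrite !mxE.
Qed.

Lemma one_laplacian : (const_mx 1 : 'rV[R]_n) *m laplacian E R = 0.
Proof.
rewrite /laplacian mulmxA.
have -> : (const_mx 1 : 'rV[R]_n) *m (incidence E R)^T = 0.
  apply/rowP => e; rewrite !mxE.
  transitivity (\sum_k incidence E R e k * (fun _ => 1 : R) k).
    by apply: eq_bigr => k _; rewrite !mxE mul1r mulr1.
  by rewrite incidence_row subrr.
by rewrite mul0mx.
Qed.
End Real.

Lemma cnt_enum (T : finType) (p : pred T) : count p (enum T) = #|p|.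
Proof. by rewrite -sum1_count big_enum_cond sum1_card. Qed.

Section Ray.
Variables (R : rcfType) (n m : nat) (E : 'I_m -> 'I_n * 'I_n).
Local Notation C := (complex R).
Local Notation toC := (real_complex R).
Local Open Scope sesquilinear_scope.

Lemma conjR (r : R) : (toC r)^* = toC r.
Proof. by apply: conj_Creal; rewrite /real_complex_def complex_real. Qed.

Lemma rayleigh (alpha : R) (y : 'I_n -> R) :
  second_smallest_eigenvalue (@laplacian n m E R) alpha -> \sum_i y i = 0 ->
  alpha * \sum_i y i ^+ 2 <= \sum_e (y (E e).1 - y (E e).2) ^+ 2.
Proof.
move=> [s [ss cp ->]] sy0.
set a := s`_1.
have [a0|apos] := lerP a 0.
  apply: (@le_trans _ _ 0).
    by rewrite mulr_le0_ge0 // sumr_ge0 // => i _; exact: sqr_ge0.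
  by apply: sumr_ge0 => e _; exact: sqr_ge0.
set L := laplacian E R.
have Lsym : L^T = L by rewrite /L /laplacian trmx_mul trmxK.
have Lone : (const_mx 1 : 'rV[R]_n) *m L = 0 by apply: one_laplacian.
have Lq : ((\row_i y i) *m L *m (\row_i y i)^T) 0 0 =
  \sum_e (y (E e).1 - y (E e).2) ^+ 2 by apply: quad_laplacian.
change (char_poly L = \prod_(r <- s) ('X - r%:P)) in cp; clearbody L.
set Lc := map_mx toC L.
have Lct : Lc^t* = Lc.
  apply/matrixP=> i j; rewrite !mxE conjR; by rewrite -[in LHS]Lsym mxE.
have Lnorm : Lc \is normalmx by apply/normalmxP; rewrite Lct.
set P := spectralmx Lc; set D := spectral_diag Lc.
have LcE : Lc = invmx P *m diag_mx D *m P by apply/orthomx_spectralP.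
have Pu : P \is unitarymx := spectral_unitarymx Lc.
have PPt : P *m P^t* = 1%:M by apply/unitarymxP.
have PtP : P^t* *m P = 1%:M by rewrite -invmx_unitary // mulVmx // spectral_unit.
have pe : perm_eq (map toC s) [seq D 0 i | i <- enum 'I_n].
  apply: prod_XsubC_eq.
  transitivity (char_poly Lc).
    rewrite /Lc -map_char_poly cp rmorph_prod big_map.
    by apply: eq_bigr => r _; rewrite rmorphB /= map_polyX map_polyC.
  rewrite LcE char_poly_conj ?spectral_unit // char_poly_trig ?diag_mx_is_trig //.
  rewrite big_map big_enum /=; apply: eq_bigr => i _; by rewrite mxE eqxx mulr1n.
have Dreal : forall i, exists r, D 0 i = toC r.
  move=> i; have : D 0 i \in map toC s by rewrite (perm_mem pe) map_f // mem_enum.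
  by case/mapP => r _ ->; exists r.
have cnt : (count (fun x : C => (x < toC a)%R) [seq (D 0 i)%R | i <- enum 'I_n] <= 1)%N.
  rewrite -(permP pe) count_map.
  rewrite (eq_count (a2 := fun r : R => (r < a)%R)); first exact: count_lt_sorted.
  by move=> r /=; rewrite ltcR.
pose one : 'rV[C]_n := const_mx 1.
pose yc : 'rV[C]_n := \row_i toC (y i).
pose u := one *m P^t*.
pose z := yc *m P^t*.
have oneL : one *m Lc = 0.
  have -> : one = map_mx toC (const_mx 1) by rewrite map_const_mx rmorph1.
  by rewrite /Lc -map_mxM Lone map_mx0.
have uD : forall j, u 0 j * D 0 j = 0.
  move=> j; have : u *m diag_mx D = 0.
    have LcPt : Lc *m P^t* = P^t* *m diag_mx D.
      by rewrite LcE invmx_unitary // -!mulmxA PPt mulmx1.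
    by rewrite /u -mulmxA -LcPt mulmxA oneL mul0mx.
  by move/matrixP/(_ 0 j); rewrite mul_mx_diag !mxE.
have ztE : z^t* = P *m yc^t* by rewrite /z trmx_mul map_mxM trmxCK.
have ycE : yc^t* = map_mx toC (\row_i y i)^T.
  by apply/matrixP => i j; rewrite !mxE conjR.
have ycE' : yc = map_mx toC (\row_i y i) by apply/matrixP => i j; rewrite !mxE.
have zu : \sum_j z 0 j * (u 0 j)^* = 0.
  have : (z *m u^t*) 0 0 = 0.
    rewrite /z /u trmx_mul map_mxM trmxCK mulmxA -(mulmxA yc) PtP mulmx1.
    rewrite mxE (eq_bigr (fun i => toC (y i))); last first.
      by move=> i _; rewrite !mxE rmorph1 mulr1.
    by rewrite -rmorph_sum sy0 rmorph0.
  move=> H; rewrite -[RHS]H mxE; by apply: eq_bigr => j _; rewrite !mxE.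
have Q : toC (\sum_e (y (E e).1 - y (E e).2) ^+ 2) =
         \sum_j D 0 j * (z 0 j * (z 0 j)^*).
  rewrite -Lq.
  have -> : toC ((\row_i y i *m L *m (\row_i y i)^T) 0 0) = (yc *m Lc *m yc^t*) 0 0.
    by rewrite ycE ycE' /Lc -!map_mxM [in RHS]mxE.
  rewrite LcE invmx_unitary // !mulmxA -/z -(mulmxA _ P) -ztE.
  rewrite mxE; apply: eq_bigr => j _; rewrite mul_mx_diag !mxE.
  by rewrite mulrAC mulrC mulrA.
have N : toC (\sum_i y i ^+ 2) = \sum_j z 0 j * (z 0 j)^*.
  have -> : toC (\sum_i y i ^+ 2) = (yc *m yc^t*) 0 0.
    rewrite mxE rmorph_sum; apply: eq_bigr => i _.
    by rewrite !mxE conjR rmorphXn expr2.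
  have -> : yc *m yc^t* = z *m z^t*.
    by rewrite ztE /z -(mulmxA yc) (mulmxA _ P) PtP mul1mx.
  rewrite mxE.
  by apply: eq_bigr => j _; rewrite !mxE.
have aC : (0 : C) < toC a by rewrite -(rmorph0 (real_complex R)) ltcR.
have geD : forall j, ~~ (D 0 j < toC a) -> toC a <= D 0 j.
  by move=> j; case: (Dreal j) => r ->; rewrite ltcR lecR -leNgt.
have hgood : forall j, z 0 j = 0 \/ toC a <= D 0 j.
  case: (pickP (fun i => D 0 i < toC a)) => [i0 Hi0 | none]; last first.
    by move=> j; right; apply: geD; rewrite none.
  have others : forall j, j != i0 -> toC a <= D 0 j.
    move=> j ji0; apply: geD; apply/negP => Hj.
    move: cnt; rewrite count_map cnt_enum leqNgt => /negP; apply.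
    by apply/card_gt1P; exists j, i0; split.
  have uj0 : forall j, j != i0 -> u 0 j = 0.
    move=> j /others Hj; have Dn0 : D 0 j != 0 by rewrite gt_eqF // (lt_le_trans aC Hj).
    by move: (uD j) => /eqP; rewrite mulf_eq0 (negbTE Dn0) orbF => /eqP.
  have ui0 : u 0 i0 != 0.
    apply/eqP => ui00.
    have u0 : u = 0.
      by apply/rowP => j; rewrite [RHS]mxE; case: (eqVneq j i0) => [->|/uj0].
    have : u *m P = one by rewrite /u -mulmxA PtP mulmx1.
    rewrite u0 mul0mx => /rowP/(_ i0); rewrite !mxE => /eqP.
    by rewrite eq_sym oner_eq0.
  have zi0 : z 0 i0 = 0.
    move: zu; rewrite (bigD1 i0) //= big1 ?addr0; last first.
      by move=> j /uj0 ->; rewrite rmorph0 mulr0.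
    by move/eqP; rewrite mulf_eq0 conjC_eq0 (negbTE ui0) orbF => /eqP.
  by move=> j; case: (eqVneq j i0) => [->|/others]; [left|right].
have : toC (a * \sum_i y i ^+ 2) <= toC (\sum_e (y (E e).1 - y (E e).2) ^+ 2).
  have -> : toC (a * \sum_i y i ^+ 2) = toC a * toC (\sum_i y i ^+ 2) by rewrite rmorphM.
  rewrite Q N mulr_sumr; apply: ler_sum => j _.
  case: (hgood j) => [->|h]; first by rewrite mul0r !mulr0.
  by apply: ler_wpM2r => //; exact: mul_conjC_ge0.
by rewrite lecR.
Qed.
End Ray.

Lemma tuple_sum (T : finType) (V : nmodType) k (f : k.+1.-tuple T -> V) :
  \sum_(s : k.+1.-tuple T) f s = \sum_(e : T) \sum_(t : k.-tuple T) f (cons_tuple e t).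
Proof.
rewrite pair_big /= (reindex (fun p : T * k.-tuple T => cons_tuple p.1 p.2)) //=.
exists (fun s => (thead s, behead_tuple s)).
  by move=> [e t] _; congr pair; apply: val_inj.
by move=> s _; rewrite [in RHS](tuple_eta s); apply: val_inj.
Qed.

Lemma sq_sum_le (R : realDomainType) (I : finType) (f : I -> R) :
  (forall i, 0 <= f i) -> \sum_i f i ^+ 2 <= (\sum_i f i) ^+ 2.
Proof.
move=> f0; rewrite expr2 mulr_suml; apply: ler_sum => i _.
rewrite mulr_sumr (bigD1 i) //= expr2 lerDl.
by apply: sumr_ge0 => j _; apply: mulr_ge0.
Qed.

Section Steps.
Variables (R : rcfType) (n m : nat) (E : 'I_m -> 'I_n * 'I_n).

Lemma split2 (g : 'I_n -> R) (i j : 'I_n) : i != j ->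
  \sum_k g k = g i + g j + \sum_(k | (k != i) && (k != j)) g k.
Proof.
move=> ij; rewrite (bigD1 i) //= (bigD1 j) //=; last by rewrite eq_sym.
by rewrite addrA; congr (_ + _); apply: eq_bigl => k; rewrite andbC.
Qed.

Lemma step_other (x : 'I_n -> R) e k : k != (E e).1 -> k != (E e).2 ->
  step E x e k = x k.
Proof. by move=> /negbTE h1 /negbTE h2; rewrite /step h1 h2. Qed.

Lemma step_sum (x : 'I_n -> R) e : (E e).1 != (E e).2 ->
  \sum_k step E x e k = \sum_k x k.
Proof.
move=> ij; rewrite (split2 _ ij) [RHS](split2 _ ij).
rewrite (eq_bigr x); last by move=> k /andP[h1 h2]; rewrite step_other.
rewrite /step eqxx eq_sym (negbTE ij) eqxx.
by case: ifP => _; congr (_ + _); ring.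
Qed.

Lemma step_sq (x : 'I_n -> R) (mu : R) e : (E e).1 != (E e).2 ->
  \sum_k (mu - step E x e k) ^+ 2 = \sum_k (mu - x k) ^+ 2
    + 2 * lambda_step E x ^+ 2
    - 2 * lambda_step E x * `|x (E e).1 - x (E e).2|.
Proof.
move=> ij; rewrite (split2 _ ij) [in RHS](split2 _ ij).
rewrite (eq_bigr (fun k => (mu - x k) ^+ 2)); last first.
  by move=> k /andP[h1 h2]; rewrite step_other.
rewrite /step eqxx eq_sym (negbTE ij) eqxx.
set l := lambda_step E x; set xi := x (E e).1; set xj := x (E e).2.
case: ifP => h.
  rewrite ltr0_norm ?subr_lt0 //; ring.
rewrite ger0_norm ?subr_ge0; last by rewrite leNgt h.
ring.
Qed.
End Steps.

Section Avg.
Variables (R : rcfType) (n m : nat) (E : 'I_m -> 'I_n * 'I_n).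
Hypothesis m0 : (0 < m)%N.
Hypothesis noloop : forall e, (E e).1 != (E e).2.

Lemma step_avg (x : 'I_n -> R) (mu : R) :
  \sum_e m%:R^-1 * \sum_k (mu - step E x e k) ^+ 2 =
  \sum_k (mu - x k) ^+ 2 - 2 * lambda_step E x ^+ 2.
Proof.
rewrite (eq_bigr (fun e => m%:R^-1 * (\sum_k (mu - x k) ^+ 2
    + 2 * lambda_step E x ^+ 2
    - 2 * lambda_step E x * `|x (E e).1 - x (E e).2|))); last first.
  by move=> e _; rewrite step_sq.
rewrite -mulr_sumr sumrB sumr_const card_ord -mulr_sumr.
have mn0 : m%:R != 0 :> R by rewrite pnatr_eq0 -lt0n.
rewrite /lambda_step -mulr_natl.
set S := \sum_e _; set F := \sum_k _.
by field.
Qed.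
End Avg.

Section Bound.
Variables (R : rcfType) (n m : nat) (E : 'I_m -> 'I_n * 'I_n).
Hypothesis m0 : (0 < m)%N.
Hypothesis noloop : forall e, (E e).1 != (E e).2.

Lemma step_bound (alpha : R) (x : 'I_n -> R) (mu : R) :
  second_smallest_eigenvalue (@laplacian n m E R) alpha ->
  \sum_k x k = n%:R * mu ->
  \sum_e m%:R^-1 * \sum_k (mu - step E x e k) ^+ 2 <=
  (1 - alpha / (2 * m%:R ^+ 2)) * \sum_k (mu - x k) ^+ 2.
Proof.
move=> Hs Hx; rewrite step_avg //.
set F := \sum_k _.
set S := \sum_e `|x (E e).1 - x (E e).2|.
have H1 : alpha * F <= \sum_e (x (E e).1 - x (E e).2) ^+ 2.
  have := @rayleigh R n m E alpha (fun k => x k - mu) Hs.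
  rewrite sumrB sumr_const card_ord Hx mulr_natl subrr => /(_ erefl).
  have -> : \sum_i (x i - mu) ^+ 2 = F.
    by apply: eq_bigr => i _; rewrite -sqrrN opprB.
  by under eq_bigr => e _ do rewrite opprB addrA subrK.
have H2 : \sum_e (x (E e).1 - x (E e).2) ^+ 2 <= S ^+ 2.
  rewrite /S; under eq_bigr => e _ do rewrite -(real_normK (num_real _)).
  by apply: sq_sum_le => e.
have mn0 : m%:R != 0 :> R by rewrite pnatr_eq0 -lt0n.
have mp : 0 < m%:R :> R by rewrite ltr0n.
set K := (2 * m%:R ^+ 2)^-1.
have K0 : 0 <= K by rewrite invr_ge0 mulr_ge0 // exprn_ge0 // ltW.
have E1 : 2 * lambda_step E x ^+ 2 = S ^+ 2 * K.
  by rewrite /lambda_step -/S /K; field.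
have E2 : (1 - alpha / (2 * m%:R ^+ 2)) * F = F - alpha * F * K.
  by rewrite /K; ring.
rewrite E1 E2.
have H3 : 0 <= S ^+ 2 - alpha * F by rewrite subr_ge0 (le_trans H1 H2).
have := mulr_ge0 H3 K0.
lra.
Qed.
End Bound.

Lemma sum_ind (R : rcfType) n (a : 'I_n) : \sum_k (k == a)%:R = 1 :> R.
Proof.
rewrite (bigD1 a) //= eqxx big1 ?addr0 // => k /negbTE ->; by [].
Qed.

End Aux.
Import Aux.

Theorem mainTheorem19 (R : rcfType) (n m : nat) (E : 'I_m -> 'I_n * 'I_n)
    (alpha : R) (c : 'I_n -> R) :
  (0 < m)%N ->
  simple_graph E ->
  connected_graph E ->
  second_smallest_eigenvalue (@laplacian n m E R) alpha ->
  forall k : nat,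
    expected_sqdist E c k
      <= (1 - alpha / (2 * (m%:R) ^+ 2)) ^+ k * sqdist_to_mean c c.
Proof.
move=> m0 [noloop _] _ Hs k.
set mu := mean c.
set b := 1 - _.
pose e0 := Ordinal m0.
have n0 : (0 < n)%N by apply: (leq_ltn_trans (leq0n _) (ltn_ord (E e0).1)).
have hmu : \sum_k c k = n%:R * mu.
  by rewrite /mu /mean mulrA mulfV ?mul1r // pnatr_eq0 -lt0n.
pose F (x : 'I_n -> R) := \sum_k (mu - x k) ^+ 2.
have Fge0 : forall x, 0 <= F x by move=> x; apply: sumr_ge0 => i _; exact: sqr_ge0.
have hb : 0 <= b.
  pose x0 (k : 'I_n) := mu + (k == (E e0).1)%:R - (k == (E e0).2)%:R.
  have sx0 : \sum_k x0 k = n%:R * mu.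
    by rewrite sumrB big_split /= sumr_const card_ord !sum_ind addrK mulr_natl.
  have Fx0 : 0 < F x0.
    rewrite /F (bigD1 (E e0).1) //= /x0 eqxx (negbTE (noloop e0)) subr0.
    have -> : mu - (mu + 1) = -1 by ring.
    have : 0 <= \sum_(i | i != (E e0).1) (mu - (mu + (i == (E e0).1)%:R - (i == (E e0).2)%:R)) ^+ 2.
      by apply: sumr_ge0 => i _; exact: sqr_ge0.
    rewrite sqrrN expr1n; lra.
  have := step_bound m0 noloop Hs sx0.
  rewrite -/b -(pmulr_lge0 b Fx0) => H; apply: le_trans H.
  apply: sumr_ge0 => e _; apply: mulr_ge0; first by rewrite invr_ge0.
  by apply: sumr_ge0 => i _; exact: sqr_ge0.
suff main : forall k x, \sum_k x k = n%:R * mu ->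
  \sum_(s : k.-tuple 'I_m) (m%:R ^+ k)^-1 * sqdist_to_mean c (run E x s) <= b ^+ k * F x.
  exact: main.
elim=> [|j IH] x sx.
  rewrite (eq_bigr (fun _ => F x)); last by move=> s _; rewrite (tuple0 s) /= expr0 invr1 mul1r.
  by rewrite sumr_const card_tuple expn0 expr0 mul1r.
rewrite tuple_sum.
rewrite (eq_bigr (fun e => m%:R^-1 * \sum_(t : j.-tuple 'I_m)
   (m%:R ^+ j)^-1 * sqdist_to_mean c (run E (step E x e) t))); last first.
  move=> e _; rewrite mulr_sumr; apply: eq_bigr => t _.
  by rewrite exprS invfM mulrA.
apply: (@le_trans _ _ (\sum_e m%:R^-1 * (b ^+ j * F (step E x e)))).
  apply: ler_sum => e _; apply: ler_wpM2l; first by rewrite invr_ge0.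
  by apply: IH; rewrite step_sum.
rewrite (eq_bigr (fun e => b ^+ j * (m%:R^-1 * F (step E x e)))); last first.
  by move=> e _; rewrite mulrCA.
rewrite -mulr_sumr exprSr -mulrA; apply: ler_wpM2l; first exact: exprn_ge0.
exact: step_bound.
Qed.
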